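(* Let $G$ be a bipartite graph without isolated vertices, with at least two vertices, such that $\mathrm{Ind}(G)$ is pure and $G$ has a cross-free pure order. Then for any pure order $\{x_1,\ldots,x_n\}$, $\{y_1,\ldots,y_n\}$ of $G$ there exist indices $i,j$ with $\deg_G x_i=1$ and $\deg_G y_j=1$.
   Context: $\mathrm{Ind}(G)$ is the complex of independent sets of $G$. A pure order of such $G$ is a partition of the vertices into independent sets $\{x_1,\ldots,x_n\}$, $\{y_1,\ldots,y_n\}$ with (1) $x_iy_i$ an edge for all $i$ and (2) $x_iy_j,x_jy_k$ edges with $i,j,k$ distinct implies $x_iy_k$ an edge. A pure order has a cross if there are $i\ne j$ with both $x_iy_j$ and $x_jy_i$ edges; otherwise it is cross-free. The degree of a vertex is the number of its neighbours. *)

(* Defs.v *)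
From mathcomp Require Import all_boot.

Set Implicit Arguments. Unset Strict Implicit. Unset Printing Implicit Defensive.

Section Graph.
Variable T : finType.
Variable e : rel T.

Definition simple_graph : Prop := symmetric e /\ irreflexive e.

Definition independent (A : {set T}) : Prop :=
  forall u v, u \in A -> v \in A -> ~~ e u v.

(* maximal independent sets = facets of Ind(G) *)
Definition maximal_independent (A : {set T}) : Prop :=
  independent A /\ forall v, v \notin A -> ~ independent (v |: A).

Definition Ind_pure : Prop :=
  forall A B, maximal_independent A -> maximal_independent B -> #|A| = #|B|.

Definition bipartite : Prop :=
  exists A : {set T}, independent A /\ independent (~: A).

Definition no_isolated : Prop := forall u, exists v, e u v.

Definition deg (u : T) : nat := #|[set v | e u v]|.

Definition pure_order (n : nat) (x y : 'I_n -> T) : Prop :=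
  injective x /\ injective y /\
      (forall i j, x i <> y j) /\
      (forall v, (exists i, x i = v) \/ (exists j, y j = v)) /\
      independent [set x i | i in 'I_n] /\
      independent [set y i | i in 'I_n] /\
      (forall i, e (x i) (y i)) /\
      (forall i j k, i <> j -> j <> k -> i <> k ->
          e (x i) (y j) -> e (x j) (y k) -> e (x i) (y k)).

Definition has_cross (n : nat) (x y : 'I_n -> T) : Prop :=
  exists i j, i <> j /\ e (x i) (y j) /\ e (x j) (y i).

Definition cross_free (n : nat) (x y : 'I_n -> T) : Prop := ~ has_cross x y.

End Graph.

(* Main.v *)
Require Import Defs.
From mathcomp Require Import all_boot.

Lemma maxel m (r : rel 'I_m) (A : {pred 'I_m}) k0 :
  (forall i, ~~ r i i) -> (forall i j k, r i j -> r j k -> r i k) ->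
  (forall i j, r i j -> i \in A -> j \in A) -> k0 \in A ->
  exists2 k, k \in A & forall j, ~~ r k j.
Proof.
move=> irr tr cl Ak0.
case: (arg_maxnP (fun k => #|[set j | r j k]|) Ak0) => k Ak kmax.
exists k => // j; apply/negP => rkj.
have Aj := cl _ _ rkj Ak.
have := kmax j Aj.
have : [set i | r i k] \proper [set i | r i j].
  apply/properP; split.
    by apply/subsetP => i; rewrite !inE => rik; exact: tr rik rkj.
  by exists k; rewrite !inE ?rkj // (negbTE (irr k)).
by move/proper_card => lt; move/(leq_trans lt); rewrite ltnn.
Qed.

Lemma leaf (T : finType) (e : rel T) m (x0 y0 : 'I_m -> T) (p : pred T) v :
  symmetric e -> pure_order e x0 y0 -> cross_free e x0 y0 ->
  (forall u w, e u w -> p u = ~~ p w) -> p v -> exists2 w, p w & deg e w = 1.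
Proof.
move=> sym [ix [iy [dxy [cov [indx [indy [diag tr]]]]]]] cf flip pv.
pose r := fun i j : 'I_m => (i != j) && e (x0 i) (y0 j).
have irr : forall i, ~~ r i i by move=> i; rewrite /r eqxx.
have trr : forall i j k, r i j -> r j k -> r i k.
  move=> i j k /andP[nij eij] /andP[njk ejk].
  have nik : i != k.
    apply/negP=> /eqP ik; subst k. apply: cf; exists i, j; split; last by split.
    exact: (elimN eqP nij).
  by rewrite /r nik; exact: (tr i j k (elimN eqP nij) (elimN eqP njk) (elimN eqP nik)).
have nxx : forall i j, ~~ e (x0 i) (x0 j).
  by move=> i j; apply: indx; apply/imsetP; [exists i | exists j].
have nyy : forall i j, ~~ e (y0 i) (y0 j).
  by move=> i j; apply: indy; apply/imsetP; [exists i | exists j].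
have cx : forall i j, r i j -> p (x0 i) = p (x0 j).
  by move=> i j /andP[_ eij]; rewrite (flip _ _ eij) (flip _ _ (diag j)).
have cy : forall i j, r i j -> p (y0 j) = p (y0 i).
  move=> i j /andP[_ eij].
  move: (flip _ _ eij) (flip _ _ (diag i)) => ->.
  by case: (p (y0 i)); case: (p (y0 j)).
case: (cov v) => [[a <-]|[a <-]] {v} in pv *.
- have clx : forall i j, r i j -> i \in [pred k | p (x0 k)] -> j \in [pred k | p (x0 k)].
    by move=> i j rij; rewrite !inE /= (cx _ _ rij).
  have [k Ak kmax] := @maxel m r [pred k | p (x0 k)] a irr trr clx pv.
  exists (x0 k) => //.
  rewrite /deg.
  have -> : [set w | e (x0 k) w] = [set y0 k].
    apply/setP => w; rewrite !inE.
    case: (cov w) => [[i <-]|[j <-]].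
      by rewrite (negbTE (nxx k i)); apply/esym/eqP/dxy.
    case: (eqVneq j k) => [->|njk]; first by rewrite eqxx diag.
    rewrite (inj_eq iy) (negbTE njk); apply/negbTE.
    by move: (kmax j); rewrite /r (eq_sym k j) njk.
  by rewrite cards1.
- have cly : forall i j, r j i -> i \in [pred k | p (y0 k)] -> j \in [pred k | p (y0 k)].
    by move=> i j rij; rewrite !inE /= -(cy _ _ rij).
  have [k Ak kmin] := @maxel m (fun i j => r j i) [pred k | p (y0 k)] a
     (fun i => irr i) (fun i j k h1 h2 => trr _ _ _ h2 h1) cly pv.
  exists (y0 k) => //.
  rewrite /deg.
  have -> : [set w | e (y0 k) w] = [set x0 k].
    apply/setP => w; rewrite !inE.
    case: (cov w) => [[i <-]|[j <-]].
      rewrite sym.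
      case: (eqVneq i k) => [->|nik]; first by rewrite eqxx diag.
      rewrite (inj_eq ix) (negbTE nik); apply/negbTE.
      by move: (kmin i); rewrite /r nik.
    by rewrite (negbTE (nyy k j)); apply/esym/eqP => h; apply: (dxy k j); rewrite h.
  by rewrite cards1.
Qed.

Theorem lemma4p7 (T : finType) (e : rel T) :
  simple_graph e -> bipartite e -> no_isolated e -> 2 <= #|T| ->
  Ind_pure e ->
  (exists (m : nat) (x0 y0 : 'I_m -> T), pure_order e x0 y0 /\ cross_free e x0 y0) ->
  forall (n : nat) (x y : 'I_n -> T), pure_order e x y ->
    exists i j : 'I_n, deg e (x i) = 1 /\ deg e (y j) = 1.
Proof.
move=> [sym irr] _ _ hT _ [m [x0 [y0 [po cf]]]] n x y po'.
have [ix [iy [dxy [cov [indx [indy [diag tr]]]]]]] := po'.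
pose X := [set x i | i in 'I_n].
have xX : forall i, x i \in X by move=> i; apply/imsetP; exists i.
have yX : forall j, y j \notin X.
  by move=> j; apply/imsetP => -[i _ h]; exact: dxy i j (esym h).
have flip : forall u w, e u w -> (u \in X) = ~~ (w \in X).
  move=> u w euw.
  case: (cov u) => [[i <-]|[j <-]] in euw *; case: (cov w) => [[i' <-]|[j' <-]] in euw *.
  - by rewrite (negbTE (indx _ _ (xX i) (xX i'))) in euw.
  - by rewrite xX (negbTE (yX j')).
  - by rewrite xX (negbTE (yX j)).
  - have yj : forall k, y k \in [set y i | i in 'I_n] by move=> k; apply/imsetP; exists k.
    by rewrite (negbTE (indy _ _ (yj j) (yj j'))) in euw.
have : 0 < #|T| by apply: leq_trans hT.
case/card_gt0P => v _.
have [i0 _] : exists i : 'I_n, true by case: (cov v) => [[i _]|[i _]]; exists i.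
have [w1 w1X dw1] := @leaf T e m x0 y0 (fun u => u \in X) (x i0) sym po cf flip (xX i0).
have flip' : forall u w, e u w -> (u \notin X) = ~~ (w \notin X).
  by move=> u w euw; rewrite (flip _ _ euw).
have [w2 w2X dw2] := @leaf T e m x0 y0 (fun u => u \notin X) (y i0) sym po cf flip' (yX i0).
case/imsetP: w1X => i _ ->{w1} in dw1.
case: (cov w2) => [[j hj]|[j hj]]; first by rewrite -hj xX in w2X.
by exists i, j; rewrite hj.
Qed.
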